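(* Assume $\|\phi_{y,x}\|\le\Phi$ for all inputs $x$ and outputs $y$, for some $\Phi>0$. Then there exist $M_1,M_2>0$ such that for all $\theta\in\Theta$, $$\frac1{N_1}\sum_{(x,y_w,y_\ell)\in\mathcal{D}_{\mathrm{DPO}}}\|g_{\mathrm{DPO}}(\theta;x,y_w,y_\ell)\|^2\le M_1^2,\qquad \frac1{N_2}\sum_{(x,y)\in\mathcal{D}_{\mathrm{SFT}}}\|g_{\mathrm{SFT}}(\theta;x,y)\|^2\le M_2^2.$$
   Context: $\Theta\subseteq\mathbb{R}^d$. Policy model: for a finite output set $\mathcal{Y}$, $\pi_\theta(y\mid x)=\exp(\theta^\top\phi_{y,x})/\sum_{y'\in\mathcal{Y}}\exp(\theta^\top\phi_{y',x})$ with feature vectors $\phi_{y,x}\in\mathbb{R}^d$; the reference policy is $\pi_{\mathrm{ref}}=\pi_{\theta_{\mathrm{ref}}}$ for fixed $\theta_{\mathrm{ref}}$. Datasets $\mathcal{D}_{\mathrm{DPO}}=\{(x^{(i)},y_w^{(i)},y_\ell^{(i)})\}_{i=1}^{N_1}$ and $\mathcal{D}_{\mathrm{SFT}}=\{(x^{(i)},y^{(i)})\}_{i=1}^{N_2}$. With $\sigma$ the sigmoid and $\beta>0$, $h_\beta(\theta;x,y_w,y_\ell)=\beta\log\frac{\pi_\theta(y_w|x)}{\pi_{\mathrm{ref}}(y_w|x)}-\beta\log\frac{\pi_\theta(y_\ell|x)}{\pi_{\mathrm{ref}}(y_\ell|x)}$, $g_{\mathrm{DPO}}(\theta;x,y_w,y_\ell)=-(1-\sigma(h_\beta(\theta;x,y_w,y_\ell)))\nabla_\theta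 h_\beta(\theta;x,y_w,y_\ell)$, and $g_{\mathrm{SFT}}(\theta;x,y)=-\nabla_\theta\pi_\theta(y|x)/\pi_\theta(y|x)$. *)

(* Defs.v *)
From HB Require Import structures.
From mathcomp Require Import all_boot all_order all_algebra.
From mathcomp Require Import all_classical all_reals all_analysis.
Set Implicit Arguments. Unset Strict Implicit. Unset Printing Implicit Defensive.
Import Order.TTheory GRing.Theory Num.Theory.
Import numFieldNormedType.Exports.
Local Open Scope ring_scope.

Section Defs.
Variables (R : realType) (d : nat).

Definition dotp (u v : 'rV[R]_d) : R := \sum_(i < d) u 0 i * v 0 i.
Definition enorm (v : 'rV[R]_d) : R := Num.sqrt (dotp v v).

Definition grad (f : 'rV[R]_d -> R) (theta : 'rV[R]_d) : 'rV[R]_d :=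
  \row_(i < d) derive f theta (delta_mx 0 i).

Definition sigmoid (z : R) : R := 1 / (1 + expR (- z)).

Variables (X : Type) (Y : finType).

Definition policy (phi : X -> Y -> 'rV[R]_d) (theta : 'rV[R]_d) (x : X) (y : Y) : R :=
  expR (dotp theta (phi x y)) / \sum_(y' : Y) expR (dotp theta (phi x y')).

Definition h_beta (phi : X -> Y -> 'rV[R]_d) (theta_ref : 'rV[R]_d) (beta : R)
  (theta : 'rV[R]_d) (x : X) (yw yl : Y) : R :=
  beta * ln (policy phi theta x yw / policy phi theta_ref x yw)
  - beta * ln (policy phi theta x yl / policy phi theta_ref x yl).

Definition g_DPO phi theta_ref beta (theta : 'rV[R]_d) (x : X) (yw yl : Y) : 'rV[R]_d :=
  - ((1 - sigmoid (h_beta phi theta_ref beta theta x yw yl))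
      *: grad (fun t => h_beta phi theta_ref beta t x yw yl) theta).

Definition g_SFT phi (theta : 'rV[R]_d) (x : X) (y : Y) : 'rV[R]_d :=
  - ((policy phi theta x y)^-1 *: grad (fun t => policy phi t x y) theta).

End Defs.

(* Main.v *)
Require Import Defs.
From HB Require Import structures.
From mathcomp Require Import all_boot all_order all_algebra.
From mathcomp Require Import all_classical all_reals all_analysis.
From mathcomp Require Import ring lra.
Import Order.TTheory GRing.Theory Num.Theory.
Import numFieldNormedType.Exports.
Local Open Scope ring_scope.

Section H.
Variables (R : realType) (d : nat).

Lemma dirE (f : 'rV[R]_d -> R) a v :
  derive f a v = derive (fun h : R => f (h *: v + a)) 0 1.
Proof.
rewrite /derive; do 2 f_equal; apply/funext => h /=.
by rewrite scale0r add0r addr0 -[h%:A]/(h * 1) mulr1.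
Qed.

Lemma dotp_lin (t w : 'rV[R]_d) (i : 'I_d) (h : R) :
  dotp (h *: delta_mx 0 i + t) w = h * w 0 i + dotp t w.
Proof.
rewrite /dotp.
under eq_bigr do rewrite !mxE mulrDl.
rewrite big_split /=; congr (_ + _).
rewrite (bigD1 i) //= big1 ?addr0; first by rewrite eqxx /= mulr1.
by move=> j /negbTE ji; rewrite ji mulr0 mul0r.
Qed.

Variables (X : Type) (Y : finType).

Lemma S_gt0 (phi : X -> Y -> 'rV[R]_d) t x (y : Y) :
  0 < \sum_(y' : Y) expR (dotp t (phi x y')).
Proof.
rewrite (bigD1 y) //=; apply: (lt_le_trans (expR_gt0 (dotp t (phi x y)))).
by rewrite lerDl sumr_ge0 // => i _; rewrite ltW // expR_gt0.
Qed.

Lemma policy_gt0 (phi : X -> Y -> 'rV[R]_d) t x y : 0 < policy phi t x y.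
Proof. by rewrite /policy divr_gt0 ?expR_gt0 // (S_gt0 _ _ _ y). Qed.

Lemma ln_policy (phi : X -> Y -> 'rV[R]_d) t x y : ln (policy phi t x y) =
  dotp t (phi x y) - ln (\sum_(y' : Y) expR (dotp t (phi x y'))).
Proof.
by rewrite /policy ln_div ?expRK // posrE ?expR_gt0 ?(S_gt0 _ _ _ y).
Qed.

Lemma h_beta_aff (phi : X -> Y -> 'rV[R]_d) tr beta t x yw yl :
  h_beta phi tr beta t x yw yl =
  beta * (dotp t (phi x yw) - dotp t (phi x yl))
  - beta * (dotp tr (phi x yw) - dotp tr (phi x yl)).
Proof.
rewrite /h_beta !ln_div ?posrE ?policy_gt0 ?expR_gt0 ?(S_gt0 _ _ _ yw) // !expRK.
by ring.
Qed.
End H.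
Section H2.
Variable R : realType.
Lemma aff_der (c k : R) : derive (fun h : R => c + h * k) 0 1 = k.
Proof.
have H : is_derive (0:R) 1 (fun h : R => c + h * k) k.
  apply: is_derive_eq.
  by rewrite add0r mul1r scale0r add0r -[k%:A]/(k*1) mulr1.
exact: derive_val.
Qed.
End H2.
Section H3.
Variables (R : realType) (d : nat) (X : Type) (Y : finType).

Lemma grad_h (phi : X -> Y -> 'rV[R]_d) tr beta t x yw yl i :
  grad (fun t => h_beta phi tr beta t x yw yl) t 0 i =
  beta * (phi x yw 0 i - phi x yl 0 i).
Proof.
rewrite /grad mxE dirE.
set c := h_beta phi tr beta t x yw yl.
have -> : (fun h : R => h_beta phi tr beta (h *: delta_mx 0 i + t) x yw yl)
  = (fun h => c + h * (beta * (phi x yw 0 i - phi x yl 0 i))).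
  by apply/funext => h; rewrite /c !h_beta_aff !dotp_lin; ring.
exact: aff_der.
Qed.

Lemma sum_der (r : seq Y) (F : Y -> R -> R) (dF : Y -> R) :
  (forall y, is_derive (0:R) 1 (F y) (dF y)) ->
  is_derive (0:R) 1 (fun h => \sum_(y <- r) F y h) (\sum_(y <- r) dF y).
Proof.
move=> HF; elim: r => [|y r IH].
  have -> : (fun h : R => \sum_(y <- [::]) F y h) = cst 0.
    by apply/funext => h; rewrite big_nil.
  rewrite big_nil; exact: is_derive_cst.
have -> : (fun h : R => \sum_(y0 <- y :: r) F y0 h) =
  (F y) + (fun h => \sum_(y0 <- r) F y0 h).
  by apply/funext => h; rewrite big_cons.
rewrite big_cons; exact: is_deriveD.
Qed.
End H3.
Section H4.
Variables (R : realType).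
Lemma aff_is_der (a b : R) : is_derive (0:R) 1 (fun h : R => h * a + b) a.
Proof.
apply: is_derive_eq.
by rewrite scale0r add0r addr0 -[a%:A]/(a*1) mulr1.
Qed.

Lemma exp_is_der (a b : R) :
  is_derive (0:R) 1 (fun h : R => expR (h * a + b)) (a * expR b).
Proof.
have H := @is_derive1_comp R expR (fun h => h * a + b) 0 _ a
  (is_derive_expR _) (aff_is_der a b).
by rewrite mul0r add0r mulrC in H.
Qed.
End H4.
Section H5.
Variables (R : realType) (d : nat) (X : Type) (Y : finType).

Lemma gsft_entry (phi : X -> Y -> 'rV[R]_d) t x y i :
  g_SFT phi t x y 0 i = - (phi x y 0 i -
    (\sum_(y' : Y) expR (dotp t (phi x y')) * phi x y' 0 i)
      / \sum_(y' : Y) expR (dotp t (phi x y'))).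
Proof.
rewrite /g_SFT /grad; rewrite -[in LHS]/((- ((policy phi t x y)^-1 *: (\row_(j < d) derive (fun t0 : 'rV[R]_d => policy phi t0 x y) t (delta_mx 0 j)) : 'rV[R]_d)) 0 i) !mxE dirE.
set S := \sum_(y' : Y) expR (dotp t (phi x y')).
set E := fun h : R => expR (h * phi x y 0 i + dotp t (phi x y)).
set Sf := fun h : R => \sum_(y' <- index_enum Y) expR (h * phi x y' 0 i + dotp t (phi x y')).
have -> : (fun h : R => policy phi (h *: delta_mx 0 i + t) x y) =
  E * (fun h => (Sf h)^-1).
  apply/funext => h; rewrite /policy /E /Sf dotp_lin /=.
  by congr (_ / _); apply: eq_bigr => y' _; rewrite dotp_lin.
have S0 : Sf 0 = S.
  by rewrite /Sf /S; apply: eq_bigr => y' _; rewrite mul0r add0r.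
have E0 : E 0 = expR (dotp t (phi x y)) by rewrite /E mul0r add0r.
have HS : is_derive (0:R) 1 Sf (\sum_(y' <- index_enum Y) phi x y' 0 i * expR (dotp t (phi x y'))).
  apply: sum_der => y'; exact: exp_is_der.
have Sgt : 0 < S by exact: (@S_gt0 _ _ _ _ phi t x y).
have Sf0 : Sf 0 != 0 by rewrite S0 gt_eqF.
have HV := is_deriveV Sf0 HS.
have HE : is_derive (0:R) 1 E (phi x y 0 i * expR (dotp t (phi x y))).
  exact: exp_is_der.
have HM := is_deriveM HE HV.
rewrite (@derive_val _ _ _ _ _ _ _ HM) E0 S0 /policy -/S.
have -> : \sum_(y' : Y) expR (dotp t (phi x y')) * phi x y' 0 i =
  \sum_(y' : Y) phi x y' 0 i * expR (dotp t (phi x y')).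
  by apply: eq_bigr => y' _; rewrite mulrC.
set T := \sum_(y' : Y) phi x y' 0 i * expR (dotp t (phi x y')).
have P0 : expR (dotp t (phi x y)) != 0 by rewrite gt_eqF // expR_gt0.
have S0' : S != 0 by rewrite gt_eqF.
rewrite /GRing.scale /=.
by field; rewrite S0' P0.
Qed.
End H5.
Section B.
Variable R : realType.

Lemma sum_le_size (T : Type) (s : seq T) (f : T -> R) K :
  (forall z, f z <= K) -> \sum_(z <- s) f z <= (size s)%:R * K.
Proof.
move=> H; elim: s => [|z s IH]; first by rewrite big_nil mul0r.
by rewrite big_cons /= -addn1 natrD mulrDl mul1r addrC lerD.
Qed.

Lemma avg_le (T : Type) (s : seq T) (f : T -> R) K :
  0 <= K -> (forall z, f z <= K) -> (size s)%:R^-1 * \sum_(z <- s) f z <= K.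
Proof.
move=> K0 H; case: s => [|z s]; first by rewrite big_nil mulr0.
have := @sum_le_size _ (z :: s) _ _ H; set n := (size (z :: s))%:R => Hs.
have n0 : 0 < n by rewrite /n ltr0n.
by rewrite ler_pdivrMl.
Qed.

Lemma jensen (I : finType) (w a : I -> R) :
  (forall j, 0 <= w j) -> 0 < \sum_j w j ->
  ((\sum_j w j * a j) / \sum_j w j) ^+ 2 <= (\sum_j w j * a j ^+ 2) / \sum_j w j.
Proof.
move=> w0; set S := \sum_j w j => S0; set m := (\sum_j w j * a j) / S.
have H : 0 <= \sum_j w j * (a j - m) ^+ 2.
  by apply: sumr_ge0 => j _; rewrite mulr_ge0 ?sqr_ge0.
have E : \sum_j w j * (a j - m) ^+ 2 =
  \sum_j w j * a j ^+ 2 - 2 * m * \sum_j w j * a j + m ^+ 2 * S.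
  rewrite /S [2 * m * _]big_distrr [m ^+ 2 * _]big_distrr -sumrB -big_split /=.
  by apply: eq_bigr => j _; ring.
have mS : \sum_j w j * a j = m * S by rewrite /m divfK // gt_eqF.
rewrite ler_pdivlMr //; rewrite E mS in H; nra.
Qed.
End B.
Section C.
Variables (R : realType) (d : nat) (X : Type) (Y : finType).

Lemma entryNZ (c : R) (v : 'rV[R]_d) i : (- (c *: v)) 0 i = - (c * v 0 i).
Proof. by rewrite !mxE. Qed.

Lemma enorm2 (v : 'rV[R]_d) : enorm v ^+ 2 = \sum_i v 0 i ^+ 2.
Proof.
rewrite /enorm sqr_sqrtr /dotp; last by apply: sumr_ge0 => i _; rewrite -expr2 sqr_ge0.
by apply: eq_bigr => i _; rewrite expr2.
Qed.

Lemma norm_le (v : 'rV[R]_d) P : enorm v <= P -> \sum_i v 0 i ^+ 2 <= P ^+ 2.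
Proof.
move=> H; rewrite -enorm2 !expr2; have e0 : 0 <= enorm v by exact: sqrtr_ge0.
by apply: ler_pM.
Qed.

Lemma sigmoid01 (z : R) : 0 <= 1 - sigmoid z <= 1.
Proof.
have e0 := expR_gt0 (- z).
have s0 : 0 <= sigmoid z by rewrite /sigmoid divr_ge0 // ltW // addr_gt0.
have s1 : sigmoid z <= 1 by rewrite /sigmoid ler_pdivrMr ?addr_gt0 // mul1r lerDl ltW.
apply/andP; split; lra.
Qed.

Lemma dpo_bound (phi : X -> Y -> 'rV[R]_d) tr beta Phi t x yw yl :
  (forall x y, enorm (phi x y) <= Phi) ->
  enorm (g_DPO phi tr beta t x yw yl) ^+ 2 <= (2 * beta * Phi) ^+ 2.
Proof.
move=> HP; rewrite enorm2 /g_DPO.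
set c := 1 - _.
have /andP[c0 c1] : 0 <= c <= 1 by exact: sigmoid01.
have Ha := norm_le _ _ (HP x yw); have Hb := norm_le _ _ (HP x yl).
apply: (le_trans (y := \sum_i (beta ^+ 2 * (2 * phi x yw 0 i ^+ 2 + 2 * phi x yl 0 i ^+ 2)))).
  apply: ler_sum => i _; rewrite entryNZ grad_h.
  set a := phi x yw 0 i; set b := phi x yl 0 i.
  have hc : c ^+ 2 <= 1 by rewrite expr2; nra.
  have hab : 0 <= (a + b) ^+ 2 by exact: sqr_ge0.
  have hw : 0 <= (beta * (a - b)) ^+ 2 by exact: sqr_ge0.
  rewrite sqrrN exprMn.
  apply: (le_trans (y := (beta * (a - b)) ^+ 2)).
    by rewrite -[X in _ <= X]mul1r ler_wpM2r.
  rewrite exprMn ler_wpM2l ?sqr_ge0 //; nra.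
rewrite -big_distrr /= big_split /= -!big_distrr /=.
have -> : (2 * beta * Phi) ^+ 2 = beta ^+ 2 * (4 * Phi ^+ 2) by ring.
rewrite ler_wpM2l ?sqr_ge0 //; lra.
Qed.
End C.
Section D.
Variables (R : realType) (d : nat) (X : Type) (Y : finType).

Lemma sft_bound (phi : X -> Y -> 'rV[R]_d) Phi t x y :
  (forall x y, enorm (phi x y) <= Phi) ->
  enorm (g_SFT phi t x y) ^+ 2 <= (2 * Phi) ^+ 2.
Proof.
move=> HP; rewrite enorm2.
set w := fun y' : Y => expR (dotp t (phi x y')).
set S := \sum_(y' : Y) w y'.
have S0 : 0 < S by exact: (@S_gt0 _ _ _ _ phi t x y).
have w0 : forall y', 0 <= w y' by move=> y'; rewrite ltW // expR_gt0.
apply: (le_trans (y := \sum_i (2 * phi x y 0 i ^+ 2 +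
   2 * ((\sum_(y' : Y) w y' * phi x y' 0 i ^+ 2) / S)))).
  apply: ler_sum => i _; rewrite gsft_entry sqrrN.
  have J := @jensen _ _ w (fun y' => phi x y' 0 i) w0 S0.
  rewrite -/w -/S.
  set a := phi x y 0 i; set m := (\sum_(y' : Y) w y' * phi x y' 0 i) / S.
  set q := (\sum_(y' : Y) w y' * phi x y' 0 i ^+ 2) / S.
  have hab : 0 <= (a + m) ^+ 2 by exact: sqr_ge0.
  rewrite -/m -/q in J.
  nra.
rewrite big_split /= -!big_distrr /= -big_distrl /= exchange_big /=.
have Ha := @norm_le _ _ _ _ (HP x y).
have H2 : \sum_(y' : Y) \sum_(i < d) w y' * phi x y' 0 i ^+ 2 <= S * Phi ^+ 2.
  rewrite /S big_distrl /=; apply: ler_sum => y' _.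
  by rewrite -big_distrr /= ler_wpM2l // norm_le.
have H3 : (\sum_(y' : Y) \sum_(i < d) w y' * phi x y' 0 i ^+ 2) / S <= Phi ^+ 2.
  by rewrite ler_pdivrMr // mulrC.
rewrite exprMn.
lra.
Qed.
End D.

Theorem propositionA1 (R : realType) (d : nat) (X : Type) (Y : finType)
  (Theta : set 'rV[R]_d) (phi : X -> Y -> 'rV[R]_d) (theta_ref : 'rV[R]_d)
  (beta : R) (D_DPO : seq (X * Y * Y)) (D_SFT : seq (X * Y)) (Phi : R) :
  0 < beta -> 0 < Phi ->
  (forall (x : X) (y : Y), enorm (phi x y) <= Phi) ->
  exists M1 M2 : R, 0 < M1 /\ 0 < M2 /\
    forall theta : 'rV[R]_d, theta \in Theta ->
      (size D_DPO)%:R^-1 *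
        \sum_(s <- D_DPO) enorm (g_DPO phi theta_ref beta theta s.1.1 s.1.2 s.2) ^+ 2
        <= M1 ^+ 2 /\
      (size D_SFT)%:R^-1 *
        \sum_(s <- D_SFT) enorm (g_SFT phi theta s.1 s.2) ^+ 2
        <= M2 ^+ 2.
Proof.
move=> b0 P0 HP; exists (2 * beta * Phi), (2 * Phi).
split; first by rewrite !mulr_gt0.
split; first by rewrite mulr_gt0.
move=> theta _; split; apply: avg_le; rewrite ?sqr_ge0 // => s.
  exact: dpo_bound.
exact: sft_bound.
Qed.
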